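(* Let $(E,\rho_\theta)$ be a complete $b_v(\theta)$ metric space whose function $\theta$ is bounded, and let $S:E\to E$ be such that there is $c\in[0,1)$ with $\rho_\theta(Su,Sw)\le c\,\rho_\theta(u,w)$ for all $u,w\in E$. Then $S$ has a unique fixed point.
   Context: Let $E$ be a nonempty set, $\theta:E\times E\to[1,\infty)$ a function and $v\in\mathbb{N}$. A map $\rho_\theta:E\times E\to[0,\infty)$ is a $b_v(\theta)$ metric (and $(E,\rho_\theta)$ a $b_v(\theta)$ metric space) if for all $u,w\in E$: $\rho_\theta(u,w)=0$ iff $u=w$; $\rho_\theta(u,w)=\rho_\theta(w,u)$; and for all $u,z_1,\dots,z_v,w\in E$ pairwise distinct, $\rho_\theta(u,w)\le\theta(u,w)[\rho_\theta(u,z_1)+\rho_\theta(z_1,z_2)+\dots+\rho_\theta(z_{v-1},z_v)+\rho_\theta(z_v,w)]$. A sequence $\{u_n\}$ converges to $u$ if for every $\varepsilon>0$ there is $n_0$ with $\rho_\theta(u_n,u)<\varepsilon$ for all $n\ge n_0$; it is Cauchy if for every $\varepsilon>0$ there is $n_0$ with $\rho_\theta(u_n,u_{n+p})<\varepsilon$ for all $n\ge n_0$ and $p>0$; the space is complete if every Cauchy sequence converges in $E$. *)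

(* Defs.v *)
From Stdlib Require Import Reals List.
Import ListNotations.
Open Scope R_scope.

Fixpoint chain_sum {E : Type} (rho : E -> E -> R) (x : E) (l : list E) : R :=
  match l with
  | [] => 0
  | y :: l' => rho x y + chain_sum rho y l'
  end.

Definition is_bv_metric {E : Type} (v : nat) (theta : E -> E -> R)
  (rho : E -> E -> R) : Prop :=
  (forall u w, 1 <= theta u w) /\
  (forall u w, 0 <= rho u w) /\
  (forall u w, rho u w = 0 <-> u = w) /\
  (forall u w, rho u w = rho w u) /\
  (forall (u w : E) (zs : list E),
      length zs = v -> NoDup (u :: zs ++ [w]) ->
      rho u w <= theta u w * chain_sum rho u (zs ++ [w])).

Definition bv_converges {E : Type} (rho : E -> E -> R) (s : nat -> E) (u : E) : Prop :=
  forall eps, 0 < eps -> exists n0, forall n, (n >= n0)%nat -> rho (s n) u < eps.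

Definition bv_cauchy {E : Type} (rho : E -> E -> R) (s : nat -> E) : Prop :=
  forall eps, 0 < eps -> exists n0, forall n p, (n >= n0)%nat -> (p > 0)%nat ->
    rho (s n) (s (n + p)%nat) < eps.

Definition bv_complete {E : Type} (rho : E -> E -> R) : Prop :=
  forall s : nat -> E, bv_cauchy rho s -> exists u, bv_converges rho s u.

(* Main.v *)
Require Import Defs.
From Stdlib Require Import Reals List.
From Stdlib Require Import Arith Lia Lra Classical.
Import ListNotations.
Open Scope R_scope.

Lemma powc_le1 (c : R) n : 0 <= c <= 1 -> c ^ n <= 1.
Proof. intros H; induction n; simpl; [lra|]. nra. Qed.

Lemma powc_ge0 (c : R) n : 0 <= c -> 0 <= c ^ n.
Proof. intros; apply pow_le; auto. Qed.

Lemma iter_contr {E} (S : E -> E) (rho : E -> E -> R) c :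
  0 <= c -> (forall u w, rho (S u) (S w) <= c * rho u w) ->
  forall n a b, rho (Nat.iter n S a) (Nat.iter n S b) <= c ^ n * rho a b.
Proof.
  intros Hc HS n; induction n; intros a b; simpl.
  - lra.
  - eapply Rle_trans; [apply HS|]. specialize (IHn a b). nra.
Qed.

Lemma chain_bound {E} (rho : E -> E -> R) (f : nat -> E) (b : E) D :
  forall n s, (forall i, (s <= i)%nat -> rho (f i) (f (S i)) <= D) ->
  chain_sum rho (f s) (map f (seq (S s) n) ++ [b]) <= INR n * D + rho (f (s + n)%nat) b.
Proof.
  induction n; intros s HD.
  - simpl. rewrite Nat.add_0_r. lra.
  - cbn [seq map app chain_sum]. rewrite S_INR.
    assert (H1 := HD s (le_n _)).
    assert (H2 : chain_sum rho (f (S s)) (map f (seq (S (S s)) n) ++ [b])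
       <= INR n * D + rho (f (S s + n)%nat) b).
    { apply IHn. intros i Hi. apply HD. lia. }
    replace (s + S n)%nat with (S s + n)%nat by lia. lra.
Qed.

Lemma nodup_chain {E} (f : nat -> E) (a b : E) s n :
  (forall i j, (s <= i)%nat -> (s <= j)%nat -> (i < s + n)%nat -> (j < s + n)%nat -> f i = f j -> i = j) ->
  (forall i, (s <= i < s + n)%nat -> f i <> a) ->
  (forall i, (s <= i < s + n)%nat -> f i <> b) -> a <> b ->
  NoDup (a :: map f (seq s n) ++ [b]).
Proof.
  intros Hinj Ha Hb Hab. constructor.
  - rewrite in_app_iff, in_map_iff. intros [[i [Hi Hin]]|[H|[]]].
    + apply in_seq in Hin. apply (Ha i); auto.
    + auto.
  - clear Ha Hab. revert s Hinj Hb. induction n; intros s Hinj Hb; simpl.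
    + constructor; [intros []|constructor].
    + constructor.
      * rewrite in_app_iff, in_map_iff. intros [[i [Hi Hin]]|[H|[]]].
        -- apply in_seq in Hin. assert (i = s) by (apply Hinj; lia || auto). lia.
        -- apply (Hb s); [lia|auto].
      * apply IHn; intros; [apply Hinj; auto; lia | apply Hb; lia].
Qed.

Lemma chain_nonneg {E} (rho : E -> E -> R) : (forall u w, 0 <= rho u w) ->
  forall l a, 0 <= chain_sum rho a l.
Proof. intros H l; induction l; intros a0; simpl; [lra|]. specialize (H a0 a). specialize (IHl a). lra. Qed.

Theorem mainTheorem9 (E : Type) (e0 : E) (v : nat) (theta rho : E -> E -> R)
  (S : E -> E) :
  (1 <= v)%nat ->
  is_bv_metric v theta rho ->
  bv_complete rho ->
  (exists M, forall u w, theta u w <= M) ->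
  (exists c, 0 <= c < 1 /\ forall u w, rho (S u) (S w) <= c * rho u w) ->
  exists u, S u = u /\ forall w, S w = w -> w = u.
Proof.
  rename S into T.
  intros Hv [Hth [Hpos [Hzero [Hsym Hbv]]]] Hcomp [M HM] [c [Hc HT]].
  assert (HM1 : 1 <= M) by (eapply Rle_trans; [apply (Hth e0 e0)|apply HM]).
  assert (Huniq : forall u, T u = u -> forall w, T w = w -> w = u).
  { intros u Hu w Hw. apply Hzero. assert (H := HT w u). rewrite Hu, Hw in H.
    assert (H0 := Hpos w u). assert (rho w u * (1 - c) <= 0) by lra.
    assert (0 <= rho w u * (1 - c)) by (apply Rmult_le_pos; lra). nra. }
  assert (Hfix : forall u, T u = u -> exists u, T u = u /\ forall w, T w = w -> w = u).
  { intros u Hu. exists u. split; auto. }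
  set (x := fun n => Nat.iter n T e0).
  assert (xS : forall n, x (S n) = T (x n)) by reflexivity.
  assert (Hit := iter_contr T rho c (proj1 Hc) HT).
  assert (dist : forall n p, rho (x n) (x (n + p)%nat) <= c ^ n * rho (x 0%nat) (x p)).
  { intros n p. unfold x. rewrite Nat.iter_add. apply Hit. }
  assert (cpow1 : forall n, c ^ n <= 1) by (intros; apply powc_le1; lra).
  assert (cpow0 : forall n, 0 <= c ^ n) by (intros; apply powc_ge0; lra).
  assert (Hlim : forall y, 0 < y -> exists N, forall n, (n >= N)%nat -> c ^ n < y).
  { intros y Hy. destruct (pow_lt_1_zero c) with (y := y) as [N HN]; auto.
    rewrite Rabs_right; lra. exists N. intros n Hn. specialize (HN n Hn).
    rewrite Rabs_right in HN; auto. apply Rle_ge; auto. }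
  destruct (classic (exists n m, (n < m)%nat /\ x n = x m)) as [[n [m [Hnm Hx]]]|Hinj].
  { apply (Hfix (x n)). apply Hzero.
    set (q := (m - n)%nat).
    assert (Hq : Nat.iter q T (x n) = x n).
    { unfold x. rewrite <- Nat.iter_add. fold (x (q + n)%nat).
      replace (q + n)%nat with m by (unfold q; lia). auto. }
    assert (H := Hit q (x n) (T (x n))).
    rewrite Nat.iter_swap, Hq in H.
    assert (Hcq : c ^ q < 1).
    { destruct q as [|q'] eqn:E'; [unfold q in E'; lia|]. simpl.
      specialize (cpow1 q'). specialize (cpow0 q'). nra. }
    rewrite Hsym. assert (H0 := Hpos (x n) (T (x n))).
    specialize (cpow0 q). nra. }
  assert (xinj : forall n m, x n = x m -> n = m).
  { intros n m H. destruct (lt_eq_lt_dec n m) as [[H1|H1]|H1]; auto;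
    exfalso; apply Hinj; [exists n, m | exists m, n]; auto. }
  clear Hinj.
  set (a := fun k => rho (x 0%nat) (x k)).
  assert (a0 : forall k, 0 <= a k) by (intros; apply Hpos).
  destruct (Hlim (/ (2 * M))) as [N HN].
  { apply Rinv_0_lt_compat. lra. }
  set (L := S N).
  assert (HvL : c ^ (v * L) <= / (2 * M)).
  { replace (v * L)%nat with (N + (v * L - N))%nat by (unfold L; nia).
    rewrite pow_add. specialize (HN N (le_n _)). pose proof (cpow1 (v * L - N)%nat).
    pose proof (cpow0 (v * L - N)%nat). pose proof (cpow0 N). nra. }
  assert (HMP : M * c ^ (v * L) <= / 2).
  { replace (/ 2) with (M * / (2 * M)) by (field; lra).
    apply Rmult_le_compat_l; lra. }
  assert (HK0 : forall n, exists K0, 0 <= K0 /\ forall j, (j <= n)%nat -> a j <= K0).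
  { induction n as [|n [K0 [HK0 HK]]].
    - exists (a 0%nat). split; auto. intros j Hj. replace j with 0%nat by lia. lra.
    - exists (Rmax K0 (a (S n))). split. { eapply Rle_trans; [apply HK0|apply Rmax_l]. }
      intros j Hj. destruct (Nat.eq_dec j (S n)) as [->|Hj'].
      + apply Rmax_r.
      + eapply Rle_trans; [apply HK; lia|apply Rmax_l]. }
  destruct (HK0 (v * L)%nat) as [K0 [HK0p HK0b]].
  set (K := K0 + 2 * M * INR v * a L).
  assert (HvR : 0 <= INR v) by apply pos_INR.
  assert (HaK : forall k, a k <= K).
  { assert (Hs : forall n k, (k <= n)%nat -> a k <= K).
    2:{ intros k; apply (Hs k); lia. }
    induction n as [|n IH]; intros k Hk.
    - assert (a k <= K0) by (apply HK0b; nia).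
      unfold K. pose proof (a0 L). assert (0 <= M * INR v * a L) by (apply Rmult_le_pos; [apply Rmult_le_pos|]; lra). lra.
    - destruct (le_lt_dec k (v * L)) as [Hk'|Hk'].
      + assert (a k <= K0) by (apply HK0b; nia).
        unfold K. pose proof (a0 L). assert (0 <= M * INR v * a L) by (apply Rmult_le_pos; [apply Rmult_le_pos|]; lra). lra.
      + set (f := fun i => x (i * L)%nat).
        assert (ND : NoDup (x 0%nat :: map f (seq 1 v) ++ [x k])).
        { apply nodup_chain.
          - intros i j Hi Hj Hi' Hj' Hf. apply xinj in Hf. unfold L in Hf. nia.
          - intros i Hi Hf. apply xinj in Hf. unfold L in Hf. nia.
          - intros i Hi Hf. apply xinj in Hf. unfold L in Hf. nia.
          - intros Hf. apply xinj in Hf. nia. }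
        assert (H1 := Hbv (x 0%nat) (x k) (map f (seq 1 v)) ltac:(rewrite length_map, length_seq; auto) ND).
        assert (H2 := chain_bound rho f (x k) (a L) v 0 ltac:(intros i _; unfold f; rewrite Nat.mul_succ_l;
             eapply Rle_trans; [apply dist|]; fold (a L); pose proof (cpow1 (i * L)%nat); pose proof (a0 L); pose proof (cpow0 (i*L)%nat); nra)).
        change (f 0%nat) with (x 0%nat) in H2.
        assert (H3 : rho (f (0 + v)%nat) (x k) <= c ^ (v * L) * a (k - v * L)%nat).
        { unfold f. simpl Nat.add. pose proof (dist (v*L) (k - v*L))%nat as D; replace (v*L + (k - v*L))%nat with k in D by lia; exact D. }
        assert (Hcs := chain_nonneg rho Hpos (map f (seq 1 v) ++ [x k]) (x 0%nat)).
        assert (H4 : rho (x 0%nat) (x k) <= M * chain_sum rho (x 0%nat) (map f (seq 1 v) ++ [x k])).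
        { eapply Rle_trans; [apply H1|]. apply Rmult_le_compat_r; auto. }
        assert (IHk : a (k - v * L)%nat <= K) by (apply IH; unfold L in *; nia).
        pose proof (a0 (k - v * L)%nat).
        assert (H5 : M * c ^ (v * L) * a (k - v * L)%nat <= / 2 * K) by nra.
        fold (a k) in H4.
        assert (H6 : a k <= M * (INR v * a L) + M * c ^ (v * L) * a (k - v * L)%nat).
        { eapply Rle_trans; [apply H4|]. nra. }
        unfold K in *. lra. }
  assert (HKp : 0 <= K) by (eapply Rle_trans; [apply (a0 0%nat)|apply HaK]).
  assert (Hcau : bv_cauchy rho x).
  { intros eps Heps. destruct (Hlim (eps / (K + 1))) as [N1 HN1].
    { apply Rdiv_lt_0_compat; lra. }
    exists N1. intros n p Hn Hp. eapply Rle_lt_trans; [apply dist|]. fold (a p).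
    pose proof (HN1 n Hn) as H. pose proof (HaK p). pose proof (a0 p). pose proof (cpow0 n).
    assert (c ^ n * (K + 1) < eps).
    { apply (Rmult_lt_compat_r (K + 1)) in H; [|lra].
      unfold Rdiv in H. rewrite Rmult_assoc, Rinv_l in H; lra. }
    nra. }
  destruct (Hcomp x Hcau) as [u Hu].
  apply (Hfix u).
  destruct (classic (T u = u)) as [HTu|HTu]; auto. exfalso.
  set (r := rho u (T u)).
  assert (Hr : 0 < r).
  { destruct (Hpos u (T u)) as [H|H]; auto. exfalso. apply HTu. symmetry. apply Hzero. auto. }
  assert (Hav : forall y, exists n1, forall i, (i > n1)%nat -> x i <> y).
  { intros y. destruct (classic (exists j, x j = y)) as [[j Hj]|Hn].
    - exists j. intros i Hi Hxi. rewrite <- Hj in Hxi. apply xinj in Hxi. lia.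
    - exists 0%nat. intros i _ Hxi. apply Hn. eauto. }
  destruct (Hav u) as [n1 Hn1]. destruct (Hav (T u)) as [n2 Hn2].
  destruct v as [|v']; [lia|].
  assert (Hv'R : 0 <= INR v') by apply pos_INR.
  set (eps := r / (2 * M * (INR v' + 2))).
  assert (Heps : 0 < eps).
  { unfold eps. apply Rdiv_lt_0_compat; auto. apply Rmult_lt_0_compat; lra. }
  destruct (Hu eps Heps) as [N1 HN1].
  destruct (Hlim (eps / (a 1%nat + 1))) as [N2 HN2].
  { pose proof (a0 1%nat). apply Rdiv_lt_0_compat; lra. }
  set (n := (N1 + N2 + n1 + n2)%nat).
  assert (ND : NoDup (u :: map x (seq (S n) (S v')) ++ [T u])).
  { apply nodup_chain; auto.
    - intros i Hi Hx. apply (Hn1 i); auto. unfold n in *; lia.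
    - intros i Hi Hx. apply (Hn2 i); auto. unfold n in *; lia. }
  assert (H1 := Hbv u (T u) (map x (seq (S n) (S v'))) ltac:(rewrite length_map, length_seq; auto) ND).
  cbn [seq map app chain_sum] in H1.
  assert (H2 := chain_bound rho x (T u) eps v' (S n)).
  assert (H3 : chain_sum rho (x (S n)) (map x (seq (S (S n)) v') ++ [T u]) <= INR v' * eps + eps).
  { eapply Rle_trans; [apply H2|].
    - intros i Hi. pose proof (dist i 1%nat) as D. rewrite Nat.add_1_r in D.
      eapply Rle_trans; [apply D|]. fold (a 1%nat).
      assert (HH : c ^ i < eps / (a 1%nat + 1)) by (apply HN2; unfold n in *; lia).
      pose proof (a0 1%nat). pose proof (cpow0 i).
      assert (c ^ i * (a 1%nat + 1) < eps).
      { apply (Rmult_lt_compat_r (a 1%nat + 1)) in HH; [|lra].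
        unfold Rdiv in HH. rewrite Rmult_assoc, Rinv_l in HH; lra. }
      nra.
    - apply Rplus_le_compat_l. replace (S n + v')%nat with (S (n + v')) by lia.
      rewrite xS. eapply Rle_trans; [apply HT|].
      assert (rho (x (n + v')%nat) u < eps) by (apply HN1; unfold n; lia).
      pose proof (Hpos (x (n + v')%nat) u). nra. }
  assert (H4 : rho u (x (S n)) < eps) by (rewrite Hsym; apply HN1; unfold n; lia).
  assert (Hcs := chain_nonneg rho Hpos (x (S n) :: map x (seq (S (S n)) v') ++ [T u]) u).
  cbn [app chain_sum] in Hcs.
  assert (H5 : r <= M * (rho u (x (S n)) + chain_sum rho (x (S n)) (map x (seq (S (S n)) v') ++ [T u]))).
  { eapply Rle_trans; [apply H1|]. apply Rmult_le_compat_r; auto. }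
  assert (H6 : r <= M * ((INR v' + 2) * eps)).
  { eapply Rle_trans; [apply H5|]. apply Rmult_le_compat_l; lra. }
  assert (H7 : M * ((INR v' + 2) * eps) = r / 2).
  { unfold eps. field. lra. }
  lra.
Qed.
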